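(* Let $\mathbb{F}$ be a finite field of odd cardinality $q\ge 5$ and let $n\ge 1$. Then every matrix $A\in\mathbb{M}_n(\mathbb{F})$ can be written as $A=D+M$ where $D\in\mathbb{M}_n(\mathbb{F})$ is diagonalizable over $\mathbb{F}$ and $M\in\mathbb{M}_n(\mathbb{F})$ satisfies $M^2=0$. In particular $D^q=D$, so $A$ is the sum of a $q$-potent matrix and a square-zero matrix.
   Context: A matrix $X\in\mathbb{M}_n(\mathbb{F})$ is diagonalizable if there is an invertible $U\in\mathbb{M}_n(\mathbb{F})$ with $U^{-1}XU$ diagonal. A matrix $Z$ is $q$-potent if $Z^q=Z$; a matrix $M$ is square-zero if $M^2=0$. *)

(* Defs.v *)
From mathcomp Require Import all_boot all_order all_algebra all_field.
(* We use mathcomp's own [diagonalizable] from algebra/mxred.v: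
   diagonalizable A := exists2 P, P \in unitmx & is_diag_mx (P *m A *m invmx P). *)

(* Main.v *)
Require Import Defs.
From mathcomp Require Import all_boot all_order all_algebra all_field.
From mathcomp Require Import ring zify fingroup perm.
Local Open Scope ring_scope.

Set Implicit Arguments. Unset Strict Implicit. Unset Printing Implicit Defensive.
Import GRing.Theory.
Local Open Scope ring_scope.

Section Gen.
Variable F : finFieldType.

Definition Good n (A : 'M[F]_n) :=
  exists D M : 'M[F]_n, [/\ A = D + M, M *m M = 0 & D ^+ #|F| = D].

Lemma mxpowS n (A : 'M[F]_n) k : A ^+ k.+1 = A *m A ^+ k.
Proof. by rewrite exprS mulmxE. Qed.

Lemma card_gt0F : (0 < #|F|)%N.
Proof. by apply/card_gt0P; exists 0. Qed.

Lemma Good_sim m n (A : 'M[F]_n) (X : 'M[F]_m) (P : 'M_(m,n)) (Q : 'M_(n,m)) :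
  P *m Q = 1%:M -> Q *m P = 1%:M -> P *m A = X *m P -> Good X -> Good A.
Proof.
move=> PQ QP PA [D [M [XE MM DD]]].
exists (Q *m D *m P), (Q *m M *m P); split.
- by rewrite -mulmxDl -mulmxDr -XE -mulmxA -PA mulmxA QP mul1mx.
- by rewrite !mulmxA -(mulmxA _ P Q) PQ mulmx1 -(mulmxA _ M M) MM mulmx0 mul0mx.
have pw k : (Q *m D *m P) ^+ k.+1 = Q *m D ^+ k.+1 *m P.
  elim: k => [|k IH]; first by rewrite !expr1.
  rewrite mxpowS IH !mulmxA -(mulmxA _ P Q) PQ mulmx1.
  by rewrite -(mulmxA Q D) -mxpowS.
by have := card_gt0F; case: #|F| DD => // k DD _; rewrite pw DD.
Qed.

Lemma block_pow m1 m2 (D1 : 'M[F]_m1) (D2 : 'M[F]_m2) k :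
  (block_mx D1 0 0 D2) ^+ k = block_mx (D1 ^+ k) 0 0 (D2 ^+ k).
Proof.
elim: k => [|k IH]; first by rewrite !expr0 -scalar_mx_block.
by rewrite !mxpowS IH mulmx_block !mulmx0 !mul0mx !addr0 !add0r.
Qed.

Lemma Good_block m1 m2 (A1 : 'M[F]_m1) (A2 : 'M[F]_m2) :
  Good A1 -> Good A2 -> Good (block_mx A1 0 0 A2).
Proof.
move=> [D1 [M1 [E1 M1M D1D]]] [D2 [M2 [E2 M2M D2D]]]; rewrite E1 E2.
exists (block_mx D1 0 0 D2), (block_mx M1 0 0 M2); split.
- by rewrite add_block_mx !addr0.
- by rewrite mulmx_block M1M M2M !mulmx0 !mul0mx !addr0 block_mx0.
by rewrite (block_pow D1 D2) D1D D2D.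
Qed.

Lemma trmx_pow n (A : 'M[F]_n) k : (A ^+ k)^T = (A^T) ^+ k.
Proof.
elim: k => [|k IH]; first by rewrite !expr0 trmx1.
by rewrite mxpowS trmx_mul IH exprSr mulmxE.
Qed.

Lemma Good_tr n (A : 'M[F]_n) : Good A^T -> Good A.
Proof.
move=> [D [M [AE MM DD]]]; exists D^T, M^T; split.
- by rewrite -[A]trmxK AE linearD.
- by rewrite -trmx_mul MM trmx0.
by rewrite -trmx_pow DD.
Qed.

Lemma Good0 (A : 'M[F]_0) : Good A.
Proof. by exists 0, 0; split; rewrite ?flatmx0. Qed.

Lemma roots_pow n (X : 'M[F]_n) (rs : seq F) :
  uniq rs -> \prod_(r <- rs) (X - r%:M) = 0 -> X ^+ #|F| = X.
Proof.
case: n X => [|n] X urs P0; first by rewrite !flatmx0.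
have rt : all (root ('X^#|F| - 'X)) rs.
  by apply/allP => r _; rewrite /root !hornerE expf_card subrr.
have ur : uniq_roots rs by rewrite uniq_rootsE.
have [g gE] := uniq_roots_prod_XsubC rt ur.
have := congr1 (horner_mx X) gE.
rewrite rmorphM /= rmorph_prod /=.
under eq_bigr do rewrite rmorphB /= horner_mx_X horner_mx_C.
rewrite P0 mulr0 rmorphB rmorphXn /= horner_mx_X.
by move/eqP; rewrite subr_eq0 => /eqP.
Qed.

End Gen.

Set Implicit Arguments. Unset Strict Implicit. Unset Printing Implicit Defensive.
Import GRing.Theory.
Local Open Scope ring_scope.

Section Blocks.
Variable F : finFieldType.

Definition prodM n (X : 'M[F]_n) (rs : seq F) := \prod_(r <- rs) (X - r%:M).

Lemma prodM_cons n (X : 'M[F]_n) r rs :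
  prodM X (r :: rs) = (X - r%:M) *m prodM X rs.
Proof. by rewrite /prodM big_cons mulmxE. Qed.

Lemma prodM_nil n (X : 'M[F]_n) : prodM X [::] = 1%:M.
Proof. by rewrite /prodM big_nil. Qed.

Lemma prodM_cat n (X : 'M[F]_n) rs1 rs2 :
  prodM X (rs1 ++ rs2) = prodM X rs1 *m prodM X rs2.
Proof. by rewrite /prodM big_cat mulmxE. Qed.

Lemma prodM_conj n (B S Si : 'M[F]_n) rs :
  Si *m S = 1%:M -> S *m Si = 1%:M ->
  prodM (Si *m B *m S) rs = Si *m prodM B rs *m S.
Proof.
move=> SiS SSi; elim: rs => [|r rs IH].
  by rewrite !prodM_nil mulmx1 SiS.
rewrite !prodM_cons IH.
have -> : Si *m B *m S - r%:M = Si *m (B - r%:M) *m S.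
  by rewrite mulmxBr mulmxBl mul_mx_scalar -scalemxAl SiS scalemx1.
by rewrite !mulmxA -(mulmxA _ S Si) SSi mulmx1.
Qed.

Lemma prodM_lt m1 m2 (X1 : 'M[F]_m1) (X2 : 'M[F]_m2) C rs :
  exists Y, prodM (block_mx X1 0 C X2) rs = block_mx (prodM X1 rs) 0 Y (prodM X2 rs).
Proof.
elim: rs => [|r rs [Y IH]].
  by exists 0; rewrite !prodM_nil -scalar_mx_block.
rewrite !prodM_cons IH (scalar_mx_block m1 m2) opp_block_mx add_block_mx.
rewrite mulmx_block oppr0 !addr0 !mul0mx !mulmx0 addr0 add0r.
by rewrite add0r; eexists.
Qed.

Lemma prodM_lt0 m1 m2 (X1 : 'M[F]_m1) (X2 : 'M[F]_m2) C rsA rsB :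
  prodM X1 rsA = 0 -> prodM X2 rsB = 0 ->
  prodM (block_mx X1 0 C X2) (rsB ++ rsA) = 0.
Proof.
move=> H1 H2; rewrite prodM_cat.
have [Y1 ->] := prodM_lt X1 X2 C rsB.
have [Y2 ->] := prodM_lt X1 X2 C rsA.
rewrite H1 H2 mulmx_block !mulmx0 !mul0mx !addr0.
by rewrite block_mx0.
Qed.

Lemma prodM_scalar n (c : F) : prodM (c%:M : 'M_n) [:: c] = 0.
Proof. by rewrite prodM_cons subrr mul0mx. Qed.

Lemma avoid (s : seq F) : (size s < #|F|)%N -> exists x, x \notin s.
Proof.
move=> lt; case: (pickP (predC (mem s))) => [x /= Hx|H]; first by exists x.
exfalso; have : (#|F| <= size s)%N.
  apply: leq_trans (card_size s); apply: subset_leq_card.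
  by apply/subsetP => x _; have := H x; rewrite /= => /negbFE.
by rewrite leqNgt lt.
Qed.

Lemma two_neq0 : odd #|F| -> (2%:R : F) != 0.
Proof.
move=> Ho; apply/negP => /eqP H2.
have c2 : (2%N \in [pchar F]) by rewrite inE /= H2 eqxx.
have := card_pprimeChar c2; move: (logn _ _) => [|m] E.
  by have := finNzRing_gt1 F; rewrite (_ : #|F| = 1%N) //; exact: E.
have E2 : #|F| = (2 ^ m.+1)%N by exact: E.
by move: Ho; rewrite E2 expnS oddM.
Qed.

End Blocks.

Set Implicit Arguments. Unset Strict Implicit. Unset Printing Implicit Defensive.
Import GRing.Theory.
Local Open Scope ring_scope.

Section Tdec.
Variable F : finFieldType.
Hypothesis Hodd : odd #|F|.
Hypothesis Hq : (5 <= #|F|)%N.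

Let h2 : (2%:R : F) != 0 := two_neq0 Hodd.

Lemma oppx_neq (x : F) : x != 0 -> (x == - x) = false.
Proof.
move=> hx; apply/negbTE/eqP => h.
have : x *+ 2 = 0 by rewrite mulr2n {2}h subrr.
by move/eqP; rewrite -mulr_natr mulf_eq0 (negbTE hx) (negbTE h2).
Qed.

Lemma smxD n (a b : F) : (a + b)%:M = a%:M + b%:M :> 'M_n.
Proof. by apply/matrixP => i j; rewrite !mxE mulrnDl. Qed.

Lemma smx0 n : (0 : F)%:M = 0 :> 'M_n.
Proof. by apply/matrixP => i j; rewrite !mxE mul0rn. Qed.

Lemma Tdec k' (t1 : 'M[F]_(1, k')) (tau : F) :
  exists (U V : 'M[F]_(k' + 1)) rs1 rs2,
    [/\ U + V = block_mx 0 0 t1 tau%:M, prodM U rs1 = 0, prodM V rs2 = 0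
      & uniq (0 :: rs2 ++ rs1)].
Proof.
have [tau0|taun0] := eqVneq tau 0.
- have [al al_notin] : exists al : F, al \notin [:: 0; 1; -1] by apply: avoid; rewrite /= (leq_trans _ Hq).
  move: al_notin; rewrite !inE !negb_or => /and3P[al0 al1 aln1].
  exists (block_mx 1%:M 0 t1 al%:M), (block_mx (-1)%:M 0 0 (-al)%:M).
  exists [:: al; 1], [:: -al; -1]; split.
  + by rewrite add_block_mx tau0 !addr0 -!smxD subrr addrN !smx0.
  + by apply: (@prodM_lt0 _ _ _ _ _ _ [:: 1] [:: al]); rewrite prodM_scalar.
  + by apply: (@prodM_lt0 _ _ _ _ _ _ [:: -1] [:: -al]); rewrite prodM_scalar.
  rewrite /= !inE !negb_or !(eq_sym 0) !oppr_eq0 oner_eq0 al0 /= eqr_opp al1 /=.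
  rewrite (eq_sym (-al) al) oppx_neq // eqr_oppLR aln1 (eq_sym (-1) al) aln1 /=.
  by rewrite (eq_sym (-1) 1) oppx_neq ?oner_eq0 // al1.
- have [a a_notin] : exists a : F, a \notin [:: 0; -tau; -(tau / 2%:R)].
    by apply: avoid; rewrite /= (leq_trans _ Hq).
  move: a_notin; rewrite !inE !negb_or => /and3P[a0 atau atau2].
  exists (block_mx a%:M 0 t1 (tau + a)%:M), ((-a)%:M).
  exists [:: tau + a; a], [:: -a]; split.
  + by rewrite (scalar_mx_block k' 1) add_block_mx !addr0 -!smxD addrN addrK smx0.
  + by apply: (@prodM_lt0 _ _ _ _ _ _ [:: a] [:: tau + a]); rewrite prodM_scalar.
  + by rewrite prodM_scalar.
  rewrite /= !inE !negb_or !(eq_sym 0) oppr_eq0 a0 /= !andbT.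
  apply/and3P; split.
  + apply/eqP => h; move/eqP: atau; apply; rewrite -(addKr tau a) h.
    by rewrite addr0.
  + apply/andP; split.
    * apply/eqP => h; move/eqP: atau2; apply.
      have -> : tau = (tau + a) - a by rewrite addrK.
      rewrite -h; field; done.
    * by rewrite (eq_sym (-a) a) oppx_neq.
  + apply/eqP => h; move/eqP: taun0; apply.
    by rewrite -(addrK a tau) h subrr.
Qed.

End Tdec.

Set Implicit Arguments. Unset Strict Implicit. Unset Printing Implicit Defensive.
Import GRing.Theory.
Local Open Scope ring_scope.

Section Cyc.
Variable F : finFieldType.
Hypothesis Hodd : odd #|F|.
Hypothesis Hq : (5 <= #|F|)%N.

Lemma even_core k' (Xg : 'M[F]_(k' + 1)) (t1 : 'M[F]_(1,k')) (tau : F) :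
  exists (D M : 'M[F]_((k' + 1) + (k' + 1))) rs,
  [/\ block_mx 0 1%:M Xg (block_mx 0 0 t1 tau%:M) = D + M,
      (exists N, M = block_mx 0 0 N 0), prodM D rs = 0 & uniq (0 :: rs)].
Proof.
have [U [V [rs1 [rs2 [UV pU pV urs]]]]] := Tdec Hodd Hq t1 tau.
exists (block_mx 0 1%:M (- (U *m V)) (U + V)), (block_mx 0 0 (Xg + U *m V) 0).
exists (rs2 ++ rs1); split.
- by rewrite add_block_mx !addr0 UV (addrC Xg) addKr.
- by eexists.
- pose S := block_mx (-V) 1%:M 1%:M 0 : 'M_((k' + 1) + (k' + 1)).
  pose Si := block_mx 0 1%:M 1%:M V : 'M_((k' + 1) + (k' + 1)).
  have SiS : Si *m S = 1%:M.
    rewrite mulmx_block !mulmx0 !mul0mx !mul1mx !mulmx1 add0r addr0 addNr.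
    by rewrite addr0 -scalar_mx_block.
  have SSi : S *m Si = 1%:M.
    rewrite mulmx_block !mulmx0 !mul0mx !mul1mx !mulmx1 add0r !addr0 addNr.
    by rewrite -scalar_mx_block.
  have -> : block_mx 0 1%:M (- (U *m V)) (U + V) = Si *m block_mx U 0 1%:M V *m S.
    rewrite !mulmx_block !mulmx0 !mul0mx !mul1mx !mulmx1 !addr0 !add0r.
    by rewrite mul1mx addNr mulmxN mulmxDl opprD addrNK.
  by rewrite prodM_conj // (prodM_lt0 _ pU pV) mulmx0 mul0mx.
- by move: urs; rewrite /= mem_cat uniq_catC cat_uniq.
Qed.

Lemma even_good k' (Xg : 'M[F]_(k' + 1)) (t1 : 'M[F]_(1,k')) (tau : F) :
  Good (block_mx 0 1%:M Xg (block_mx 0 0 t1 tau%:M)).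
Proof.
have [D [M [rs [XE [N ME] pD urs]]]] := even_core Xg t1 tau.
exists D, M; split => //.
- by rewrite ME mulmx_block !mulmx0 !mul0mx !addr0 block_mx0.
- by apply: (roots_pow (rs := rs)) => //; case/andP: urs.
Qed.

Lemma odd_good k' (Xg : 'M[F]_(k' + 1)) (t1 : 'M[F]_(1,k')) (tau : F)
   (u : 'M[F]_(1, k' + 1)) (Xdl : 'M[F]_((k' + 1) + (k' + 1), 1)) :
  Good (block_mx (0 : 'M_1) (row_mx u 0) Xdl
          (block_mx 0 1%:M Xg (block_mx 0 0 t1 tau%:M))).
Proof.
have [D [M [rs [XE [N ME] pD urs]]]] := even_core Xg t1 tau.
exists (block_mx 0 0 Xdl D), (block_mx 0 (row_mx u 0) 0 M); split.
- by rewrite add_block_mx XE !addr0 add0r.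
- rewrite ME mulmx_block !mulmx0 !mul0mx !addr0 !add0r mul_row_block.
  by rewrite !mulmx0 !mul0mx !addr0 row_mx0 mulmx_block !mulmx0 !mul0mx !addr0 !block_mx0.
- apply: (roots_pow (rs := rcons rs 0)).
    by rewrite rcons_uniq; move: urs => /= /andP[-> ->].
  change (prodM (block_mx 0 0 Xdl D) (rcons rs 0) = 0).
  rewrite -cats1 prodM_cat.
  have [Y ->] := prodM_lt 0 D Xdl rs.
  rewrite pD prodM_cons prodM_nil mulmx1 smx0 subr0.
  by rewrite mulmx_block !mulmx0 !mul0mx !addr0 block_mx0.
Qed.

Lemma Good1 (A : 'M[F]_1) : Good A.
Proof.
exists A, 0; split; rewrite ?addr0 ?mulmx0 //.
apply: (roots_pow (rs := [:: A 0 0])) => //.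
change (prodM A [:: A 0 0] = 0); by rewrite {1}[A]mx11_scalar prodM_scalar.
Qed.

End Cyc.

Set Implicit Arguments. Unset Strict Implicit. Unset Printing Implicit Defensive.
Import GRing.Theory.
Local Open Scope ring_scope.

Section Kry.
Variable F : fieldType.
Variable n : nat.
Implicit Types (A : 'M[F]_n) (v : 'rV[F]_n).

Lemma powSr A i : A ^+ i *m A = A ^+ i.+1.
Proof. by rewrite exprSr. Qed.

Definition kv A v i := v *m A ^+ i.
Definition KS A v m := (\sum_(i < m) <<kv A v i>>)%MS.

Lemma KS_rec A v m : KS A v m.+1 = (KS A v m + <<kv A v m>>)%MS.
Proof. by rewrite /KS big_ord_recr. Qed.

Lemma rank_step m (S : 'M[F]_(m, n)) (x : 'rV[F]_n) :
  ~~ (x <= S)%MS -> \rank (S + <<x>>)%MS = (\rank S).+1.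
Proof.
move=> xS; apply/eqP; rewrite eqn_leq; apply/andP; split.
  apply: leq_trans (mxrank_adds_leqif _ _ ) _.
  by rewrite genmxE -[(\rank S).+1]addn1 leq_add2l rank_leq_row.
have : (S < S + <<x>>)%MS.
  rewrite ltmxE addsmxSl /= addsmx_sub submx_refl /=.
  by rewrite genmxE.
by rewrite ltmxErank => /andP[_].
Qed.

Lemma KS_rank_lt A v m : (forall i, (i < m)%N -> ~~ (kv A v i <= KS A v i)%MS) ->
  \rank (KS A v m) = m.
Proof.
elim: m => [|m IH] H; first by rewrite /KS big_ord0 mxrank0.
rewrite KS_rec rank_step ?IH //; first by move=> i lti; apply: H; rewrite ltnW.
exact: H.
Qed.

Lemma exK A v : exists m, (kv A v m <= KS A v m)%MS.
Proof.
case: (boolP [exists m : 'I_n.+1, (kv A v m <= KS A v m)%MS]).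
  by case/existsP => m Hm; exists m.
move/existsPn => H; exfalso.
have := @KS_rank_lt A v n.+1.
have : (\rank (KS A v n.+1) <= n)%N by apply: rank_leq_col.
move=> le E; have {}E : \rank (KS A v n.+1) = n.+1.
  by apply: E => i lti; exact: (H (Ordinal lti)).
by move: le; rewrite E ltnn.
Qed.

Definition ell A v := ex_minn (exK A v).

Lemma ellP A v : (kv A v (ell A v) <= KS A v (ell A v))%MS.
Proof. by rewrite /ell; case: ex_minnP. Qed.

Lemma ell_min A v m : (kv A v m <= KS A v m)%MS -> (ell A v <= m)%N.
Proof. by rewrite /ell; case: ex_minnP => l _ H /H. Qed.

Lemma ell_rank A v : \rank (KS A v (ell A v)) = ell A v.
Proof.
apply: KS_rank_lt => i lti; apply/negP => /ell_min.
by rewrite leqNgt lti.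
Qed.

Lemma ell_le A v : (ell A v <= n)%N.
Proof. by rewrite -(ell_rank A v) rank_leq_col. Qed.

Lemma kv_sub A v i : (i < ell A v)%N -> (kv A v i <= KS A v (ell A v))%MS.
Proof.
by move=> lti; apply: (sumsmx_sup (Ordinal lti)) => //; rewrite genmxE.
Qed.

Lemma KS_stable A v : (KS A v (ell A v) *m A <= KS A v (ell A v))%MS.
Proof.
rewrite /KS sumsmxMr; apply/sumsmx_subP => i _.
rewrite (eqmxMr A (genmxE (kv A v i))).
have -> : kv A v i *m A = kv A v i.+1 by rewrite /kv -mulmxA powSr.
case: (ltnP i.+1 (ell A v)) => [lt|ge]; first exact: kv_sub.
have E : i.+1 = ell A v by apply/eqP; rewrite eqn_leq ge ltn_ord.
rewrite E; exact: ellP.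
Qed.

Lemma kv_subS A v j : (kv A v j <= KS A v (ell A v))%MS.
Proof.
elim: j => [|j IH].
  case: (posnP (ell A v)) => [e0|lt]; last exact: kv_sub.
  by have := ellP A v; rewrite e0.
have -> : kv A v j.+1 = kv A v j *m A by rewrite /kv -mulmxA powSr.
by apply: submx_trans (KS_stable A v); rewrite submxMr.
Qed.

Lemma ell_gt0 A v : v != 0 -> (0 < ell A v)%N.
Proof.
move=> vn0; rewrite lt0n; apply/negP => /eqP e0.
have := ellP A v; rewrite e0 /KS big_ord0 /kv expr0 mulmx1 submx0.
by rewrite (negbTE vn0).
Qed.

Definition Kr A v := \matrix_(i < ell A v) kv A v i.

Lemma Kr_eq A v : (Kr A v :=: KS A v (ell A v))%MS.
Proof.
apply/eqmxP/andP; split.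
  by apply/row_subP => i; rewrite rowK; apply: kv_sub.
apply/sumsmx_subP => i _; rewrite genmxE.
by rewrite -(rowK (fun i => kv A v i)) row_sub.
Qed.

Lemma Kr_free A v : row_free (Kr A v).
Proof. by rewrite /row_free Kr_eq ell_rank. Qed.

End Kry.

Set Implicit Arguments. Unset Strict Implicit. Unset Printing Implicit Defensive.
Import GRing.Theory.
Local Open Scope ring_scope.

Section Decomp.
Variable F : finFieldType.
Hypothesis CycGood : forall d (B : 'M[F]_d), (0 < d)%N ->
  (forall i j : 'I_d, (i.+1 < d)%N -> B i j = (j == i.+1 :> nat)%:R) -> Good B.

Variable n : nat.
Variable A : 'M[F]_n.
Variable v : 'rV[F]_n.
Hypothesis vn0 : v != 0.
Hypothesis vmax : forall x, (ell A^T x <= ell A v)%N.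
Hypothesis IH : forall m, (m < n)%N -> forall B : 'M[F]_m, Good B.

Let d := ell A v.
Let d_gt0 : (0 < d)%N := ell_gt0 A vn0.
Let lastP : (d.-1 < d)%N. Proof. by rewrite ltn_predL. Qed.
Let lastI : 'I_d := Ordinal lastP.

Lemma exc : exists c : 'cV[F]_n, forall i : 'I_d, (kv A v i *m c) 0 0 = (i == lastI)%:R.
Proof.
have [R KrR] := row_freeP (Kr_free A v).
exists (R *m delta_mx lastI 0) => i.
have := congr1 (fun M : 'cV_d => M i 0) (congr1 (mulmx^~ (delta_mx lastI (0 : 'I_1))) KrR).
rewrite mul1mx -mulmxA [in RHS]mxE eqxx andbT => <-. rewrite !mxE. by apply: eq_bigr => k _; rewrite /Kr mxE.
Qed.

Section WithC.
Variable c : 'cV[F]_n.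
Hypothesis hc : forall i : 'I_d, (kv A v i *m c) 0 0 = (i == lastI)%:R.

Let S' := KS A^T c^T (ell A^T c^T).
Let W := kermx S'^T.

Lemma W_rank : (n - d <= \rank W)%N.
Proof. by rewrite mxrank_ker mxrank_tr ell_rank leq_sub2l. Qed.

Lemma W_stable : (W *m A <= W)%MS.
Proof.
have [Y HY] := submxP (@KS_stable F n A^T c^T).
apply/sub_kermxP.
rewrite -mulmxA.
have -> : A *m S'^T = (Y *m S')^T by rewrite -HY trmx_mul trmxK.
by rewrite trmx_mul mulmxA mulmx_ker mul0mx.
Qed.

Lemma W_orth (z : 'rV[F]_n) j : (z <= W)%MS -> z *m (A ^+ j *m c) = 0.
Proof.
move/sub_kermxP => zW.
have [y Hy] := submxP (@kv_subS F n A^T c^T j).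
have -> : A ^+ j *m c = (y *m S')^T by rewrite -Hy /kv trmx_mul -trmx_pow !trmxK.
by rewrite trmx_mul mulmxA zW mul0mx.
Qed.

Let h m := (v *m A ^+ m *m c) 0 0.

Lemma h_lt m : (m < d)%N -> h m = (m == d.-1)%:R.
Proof. by move=> lt; have := hc (Ordinal lt); rewrite /kv. Qed.

Lemma hz_entry (y : 'rV[F]_d) i :
  (y *m Kr A v *m (A ^+ i *m c)) 0 0 = \sum_(j < d) y 0 j * h (j + i)%N.
Proof.
rewrite -mulmxA mxE; apply: eq_bigr => j _; congr (_ * _).
have -> : (Kr A v *m (A ^+ i *m c)) j 0 = (row j (Kr A v) *m (A ^+ i *m c)) 0 0.
  by rewrite -row_mul !mxE.
by rewrite /Kr rowK /kv /h exprD !mulmxA.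
Qed.

Lemma inter (z : 'rV[F]_n) : (z <= Kr A v)%MS -> (z <= W)%MS -> z = 0.
Proof.
move=> zK zW; have [y yE] := submxP zK.
have hz i : \sum_(j < d) y 0 j * h (j + i)%N = 0.
  by rewrite -hz_entry -yE W_orth // mxE.
have P' i : forall j : 'I_d, (d.-1 < j + i)%N -> y 0 j = 0.
  elim: i => [|i IHi] j.
    rewrite addn0 => lt; have : (j <= d.-1)%N by rewrite -ltnS (prednK d_gt0).
    by rewrite leqNgt lt.
  case: (ltnP d.-1 (j + i)%N) => [lt _|ge lt]; first exact: IHi.
  have ji : (j + i = d.-1)%N by apply/eqP; rewrite eqn_leq ge -ltnS -addnS lt.
  have := hz i; rewrite (bigD1 j) //= ji h_lt ?ltn_predL // eqxx mulr1.
  rewrite big1 ?addr0 // => j' nj'.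
  case: (ltnP d.-1 (j' + i)%N) => [lt'|ge']; first by rewrite IHi ?mul0r.
  rewrite h_lt; last by apply: leq_ltn_trans ge' _; rewrite ltn_predL.
  case: eqP => [e|]; last by rewrite mulr0.
  suff : j' = j by move=> E; move: nj'; rewrite E eqxx.
  by apply/val_inj/eqP; rewrite -(eqn_add2r i) ji e.
rewrite yE (_ : y = 0) ?mul0mx //; apply/matrixP => i j.
rewrite (ord1 i) mxE; apply: (P' d).
by apply: leq_trans (leq_addl j d); rewrite ltn_predL.
Qed.

End WithC.

Lemma decomp_good : Good A.
Proof.
have [c hc] := exc.
pose W := kermx (KS A^T c^T (ell A^T c^T))^T.
pose Wb := row_base W.
pose P := col_mx (Kr A v) Wb.
have inter' (z : 'rV[F]_n) : (z <= Kr A v)%MS -> (z <= Wb)%MS -> z = 0.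
  by move=> zK; rewrite eq_row_base => zW; exact: (inter hc zK zW).
have cap0 : (Kr A v :&: Wb)%MS = 0.
  apply/row_matrixP => i; rewrite row0; apply: inter'.
  - exact: submx_trans (row_sub _ _) (capmxSl _ _).
  - exact: submx_trans (row_sub _ _) (capmxSr _ _).
have rW : (n - d <= \rank Wb)%N by rewrite eq_row_base; exact: W_rank.
have rK : \rank (Kr A v) = d by move/eqP: (Kr_free A v).
have rP : \rank P = (d + \rank Wb)%N.
  by rewrite /P -addsmxE mxrank_disjoint_sum // rK.
have dn : (d + \rank Wb = n)%N.
  apply/eqP; rewrite eqn_leq; apply/andP; split; first by rewrite -rP rank_leq_col.
  apply: (@leq_trans (d + (n - d))%N); last by rewrite leq_add2l.
  by rewrite subnKC //; exact: ell_le.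
have Pfree : row_free P by rewrite /row_free rP eq_row_base.
have Pfull : row_full P by rewrite /row_full rP dn.
have [Q PQ] := row_freeP Pfree.
have [Q' QP'] := row_fullP Pfull.
have QP : Q *m P = 1%:M.
  have <- // : Q' = Q by rewrite -[Q']mulmx1 -PQ mulmxA QP' mul1mx.
pose Q1 := lsubmx Q; pose Q2 := rsubmx Q.
have QE : Q = row_mx Q1 Q2 by rewrite hsubmxK.
have [KQ1 KQ2 WQ1 WQ2] : [/\ Kr A v *m Q1 = 1%:M, Kr A v *m Q2 = 0,
    Wb *m Q1 = 0 & Wb *m Q2 = 1%:M].
  by have := PQ; rewrite QE /P mul_col_row scalar_mx_block => /eq_block_mx.
have KA i : row i (Kr A v *m A) = kv A v i.+1.
  by rewrite row_mul /Kr rowK /kv -mulmxA powSr.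
have [Y1 HY1] : exists Y1, Kr A v *m A = Y1 *m Kr A v.
  apply/submxP; apply/row_subP => i; rewrite KA Kr_eq; exact: kv_subS.
have [Y2 HY2] : exists Y2, Wb *m A = Y2 *m Wb.
  apply/submxP; rewrite (eqmxMr A (eq_row_base W)) eq_row_base; exact: W_stable.
pose B := Kr A v *m A *m Q1.
pose A2 := Wb *m A *m Q2.
apply: (@Good_sim F _ _ A (block_mx B 0 0 A2) P Q) => //.
- have XE : block_mx B 0 0 A2 = P *m A *m Q.
    have Z1 : Kr A v *m A *m Q2 = 0 by rewrite HY1 -mulmxA KQ2 mulmx0.
    have Z2 : Wb *m A *m Q1 = 0 by rewrite HY2 -mulmxA WQ1 mulmx0.
    by rewrite QE /P mul_col_mx mul_col_row Z1 Z2.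
  by rewrite XE -[P *m A *m Q *m P]mulmxA QP mulmx1.
apply: Good_block.
- apply: CycGood => // i j lt.
  have -> : B i j = row i B 0 j by rewrite [in RHS]mxE.
  rewrite /B row_mul KA.
  rewrite -(rowK (fun i => kv A v i) (Ordinal lt)) -/(Kr A v) -row_mul KQ1.
  by rewrite !mxE eq_sym.
- apply: IH.
  have : (\rank Wb < d + \rank Wb)%N by rewrite -{1}(add0n (\rank Wb)) ltn_add2r.
  by rewrite dn eq_row_base.
Qed.

End Decomp.

Set Implicit Arguments. Unset Strict Implicit. Unset Printing Implicit Defensive.
Import GRing.Theory.
Local Open Scope ring_scope.

Section Perm.
Variable F : finFieldType.

Lemma mkperm N (g : nat -> nat) : (forall i, (i < N)%N -> (g i < N)%N) ->
  (forall i j, (i < N)%N -> (j < N)%N -> g i = g j -> i = j) ->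
  {s : 'S_N | forall i, val (s i) = g i}.
Proof.
move=> Hg Hinj.
pose f (i : 'I_N) : 'I_N := Ordinal (Hg i (ltn_ord i)).
have finj : injective f.
  by move=> i j /(congr1 val) /= /Hinj E; apply/val_inj/E.
by exists (perm finj) => i; rewrite permE.
Qed.

Lemma Good_perm N (B X : 'M[F]_N) (s : 'S_N) :
  (forall i j, X i j = B (s i) (s j)) -> Good X -> Good B.
Proof.
move=> XE; apply: (@Good_sim F _ _ B X (perm_mx s) (perm_mx s^-1)).
- by rewrite -perm_mxM mulgV perm_mx1.
- by rewrite -perm_mxM mulVg perm_mx1.
have -> : X = perm_mx s *m B *m perm_mx s^-1.
  by rewrite -row_permE -col_permE; apply/matrixP => i j; rewrite !mxE XE.
by rewrite -mulmxA -perm_mxM mulVg perm_mx1 mulmx1.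
Qed.

Lemma shape_even k' (Y : 'M[F]_((k' + 1) + (k' + 1))) :
  (forall i j, Y (lshift _ i) (lshift _ j) = 0) ->
  (forall i j, Y (lshift _ i) (rshift _ j) = (i == j)%:R) ->
  (forall (i : 'I_k') j, Y (rshift _ (lshift 1 i)) (rshift _ j) = 0) ->
  exists Xg t1 tau, Y = block_mx 0 1%:M Xg (block_mx 0 0 t1 tau%:M).
Proof.
move=> H1 H2 H3.
exists (dlsubmx Y), (dlsubmx (drsubmx Y)), (drsubmx (drsubmx Y) 0 0).
rewrite -[Y in LHS]submxK -[drsubmx Y in LHS]submxK -mx11_scalar.
congr block_mx.
- by apply/matrixP => i j; rewrite !mxE H1.
- by apply/matrixP => i j; rewrite !mxE H2.
congr block_mx.
- by apply/matrixP => i j; rewrite !mxE H3.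
- by apply/matrixP => i j; rewrite !mxE H3.
Qed.

Section CycG.
Hypothesis Hodd : odd #|F|.
Hypothesis Hq : (5 <= #|F|)%N.

Lemma eqb_nat (a b c e : nat) : (a == b) = (c == e) -> (a == b) = (c == e).
Proof. by []. Qed.

Lemma cyc_even k' (B : 'M[F]_((k' + 1) + (k' + 1))) :
  (forall i j : 'I_((k' + 1) + (k' + 1)), (i.+1 < (k' + 1) + (k' + 1))%N ->
      B i j = (j == i.+1 :> nat)%:R) -> Good B.
Proof.
move=> HB.
pose g i := if (i < k' + 1)%N then (i + i)%N else ((i - (k' + 1)) + (i - (k' + 1)) + 1)%N.
have [s Hs] : {s : 'S_((k' + 1) + (k' + 1)) | forall i, val (s i) = g i}.
  apply: mkperm => [i lt|i j hi hj]; rewrite /g.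
    by case: (ltnP i (k' + 1)) => ?; lia.
  by case: (ltnP i (k' + 1)) => ?; case: (ltnP j (k' + 1)) => ?; lia.
have gL (i : 'I_(k' + 1)) : val (s (lshift (k' + 1) i)) = (i + i)%N.
  by rewrite Hs /g /= ltn_ord.
have gR (i : 'I_(k' + 1)) : val (s (rshift (k' + 1) i)) = (i + i + 1)%N.
  by rewrite Hs /g /= ltnNge leq_addr /= addKn.
pose X := \matrix_(i, j) B (s i) (s j).
apply: (Good_perm (s := s) (X := X)); first by move=> i j; rewrite mxE.
have [Xg [t1 [tau ->]]] : exists Xg t1 tau, X = block_mx 0 1%:M Xg (block_mx 0 0 t1 tau%:M).
  apply: shape_even => [i j|i j|i j]; rewrite mxE HB ?gL ?gR.
  - by case: eqP => // h; exfalso; lia.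
  - by have := ltn_ord i; lia.
  - congr (_%:R); congr (nat_of_bool _); apply/idP/idP => /eqP h; apply/eqP.
      by apply/val_inj => /=; lia.
    by rewrite h; lia.
  - by have := ltn_ord i; lia.
  - by rewrite /=; case: eqP => // h; exfalso; lia.
  - by rewrite /=; have := ltn_ord i; lia.
exact: even_good.
Qed.

Lemma cyc_odd k' (B : 'M[F]_(1 + ((k' + 1) + (k' + 1)))) :
  (forall i j : 'I_(1 + ((k' + 1) + (k' + 1))), (i.+1 < 1 + ((k' + 1) + (k' + 1)))%N ->
      B i j = (j == i.+1 :> nat)%:R) -> Good B.
Proof.
move=> HB.
pose g i := if i == 0%N then 0%N else if (i - 1 < k' + 1)%N then ((i - 1) + (i - 1) + 1)%N
   else ((i - 1 - (k' + 1)) + (i - 1 - (k' + 1)) + 2)%N.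
have [s Hs] : {s : 'S_(1 + ((k' + 1) + (k' + 1))) | forall i, val (s i) = g i}.
  apply: mkperm => [i lt|i j hi hj]; rewrite /g.
    by case: eqP => ?; [lia|case: (ltnP (i - 1) (k' + 1)) => ?; lia].
  case: eqP => ?; case: eqP => ?; try lia;
  by case: (ltnP (i - 1) (k' + 1)) => ?; case: (ltnP (j - 1) (k' + 1)) => ?; lia.
have g0 : val (s (lshift _ (0 : 'I_1))) = 0%N by rewrite Hs.
have gL (i : 'I_(k' + 1)) : val (s (rshift 1 (lshift (k' + 1) i))) = (i + i + 1)%N.
  by rewrite Hs /g /= add1n subn1 /= ltn_ord.
have gR (i : 'I_(k' + 1)) : val (s (rshift 1 (rshift (k' + 1) i))) = (i + i + 2)%N.
  by rewrite Hs /g /= add1n subn1 /= ltnNge leq_addr /= addKn.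
pose X := \matrix_(i, j) B (s i) (s j).
apply: (Good_perm (s := s) (X := X)); first by move=> i j; rewrite mxE.
have [Xg [t1 [tau HY]]] : exists Xg t1 tau,
    drsubmx X = block_mx 0 1%:M Xg (block_mx 0 0 t1 tau%:M).
  apply: shape_even => [i j|i j|i j]; rewrite !mxE HB ?gL ?gR.
  - by case: eqP => // h; exfalso; lia.
  - by have := ltn_ord i; lia.
  - congr (_%:R); congr (nat_of_bool _); apply/idP/idP => /eqP h; apply/eqP.
      by apply/val_inj => /=; lia.
    by rewrite h; lia.
  - by have := ltn_ord i; lia.
  - by rewrite /=; case: eqP => // h; exfalso; lia.
  - by rewrite /=; have := ltn_ord i; lia.
have X0 : ulsubmx X = 0.
  apply/matrixP => i j; rewrite !mxE (ord1 i) (ord1 j) HB g0 //.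
  lia.
have XR : rsubmx (ursubmx X) = 0.
  apply/matrixP => i j; rewrite !mxE (ord1 i) HB ?g0 ?gR //.
  - by case: eqP => // h; exfalso; lia.
  - lia.
rewrite -[X]submxK X0 -[ursubmx X]hsubmxK XR HY.
exact: odd_good.
Qed.

Lemma parity_split d : (0 < d)%N -> d = 1%N \/ (exists k', d = ((k' + 1) + (k' + 1))%N)
   \/ (exists k', d = (1 + ((k' + 1) + (k' + 1)))%N).
Proof.
move=> d0; have := odd_double_half d; rewrite -addnn.
case: (odd d) => /= E.
  case: (posnP d./2) => [h|h]; first by left; lia.
  by right; right; exists (d./2 - 1)%N; lia.
by right; left; exists (d./2 - 1)%N; lia.
Qed.

Lemma CycGood d (B : 'M[F]_d) : (0 < d)%N ->
  (forall i j : 'I_d, (i.+1 < d)%N -> B i j = (j == i.+1 :> nat)%:R) -> Good B.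
Proof.
move=> d0 HB.
have [E|[[k' E]|[k' E]]] := parity_split d0; subst d.
- exact: Good1.
- exact: cyc_even.
- exact: cyc_odd.
Qed.

End CycG.

End Perm.

Set Implicit Arguments. Unset Strict Implicit. Unset Printing Implicit Defensive.
Import GRing.Theory.
Local Open Scope ring_scope.

Section Main.
Variable F : finFieldType.
Hypothesis Hodd : odd #|F|.
Hypothesis Hq : (5 <= #|F|)%N.

Lemma ell0 n (A : 'M[F]_n) : ell A 0 = 0%N.
Proof. by apply/eqP; rewrite -leqn0; apply: ell_min; rewrite /kv mul0mx sub0mx. Qed.

Lemma Good_all n (A : 'M[F]_n) : Good A.
Proof.
elim/ltn_ind: n A => n IH A.
case: n IH A => [|n'] IH A; first exact: Good0.
pose f (x : 'rV[F]_n'.+1) := maxn (ell A x) (ell A^T x).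
have [x0 Hx0] : {x0 | \max_x f x = f x0}.
  by apply: eq_bigmax; apply/card_gt0P; exists 0.
pose e : 'rV[F]_n'.+1 := delta_mx 0 0.
have en0 : e != 0.
  by apply/negP => /eqP /matrixP /(_ 0 0); rewrite !mxE eqxx /= => /eqP; rewrite oner_eq0.
have dm1 : (0 < f x0)%N.
  rewrite -Hx0; apply: leq_trans (leq_bigmax e); apply: leq_trans (leq_maxl _ _).
  exact: ell_gt0.
have x0n0 : x0 != 0.
  by apply/negP => /eqP x00; move: dm1; rewrite /f x00 !ell0.
have fle x : (f x <= f x0)%N by rewrite -Hx0 leq_bigmax.
case: (leqP (ell A^T x0) (ell A x0)) => h.
  apply: (decomp_good (@CycGood F Hodd Hq) x0n0) => // x.
  apply: leq_trans (leq_maxr (ell A x) _) _.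
  by have := fle x; rewrite /f (maxn_idPl h).
apply: Good_tr.
apply: (decomp_good (@CycGood F Hodd Hq) x0n0) => // x.
rewrite trmxK; apply: leq_trans (leq_maxl _ (ell A^T x)) _.
by have := fle x; rewrite /f (maxn_idPr (ltnW h)).
Qed.

End Main.

Unset Implicit Arguments.
Theorem theorem2p2 (F : finFieldType) (n : nat)
  (Hodd : odd #|F|) (Hq : (5 <= #|F|)%N) (Hn : (1 <= n)%N) (A : 'M[F]_n) :
  exists D M : 'M[F]_n,
    [/\ A = D + M, diagonalizable D, M *m M = 0 & D ^+ #|F| = D].
Proof.
have [D [M [AE MM DD]]] := Good_all Hodd Hq A.
exists D, M; split => //.
case: n Hn A D M AE MM DD => // n' _ A D M AE MM DD.
apply/diagonalizableP; exists (enum F); first exact: enum_uniq.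
apply: mxminpoly_min.
rewrite big_enum /= -finField_genPoly rmorphB rmorphXn /= horner_mx_X DD.
by rewrite subrr.
Qed.
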